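(* Let $\mathcal{M}=(S,P,E,s_{init},L)$ be a CTMC with absorbing goal state $g$, let $\varepsilon,\delta\geq0$, $q=\max_{p\in S}E(p)$ and $t\geq0$. For all $s,s'\in S$ with $s\sim_{\varepsilon,\delta}s'$, $$\left|\mathrm{Pr}_s(\lozenge^{\leq t}g)-\mathrm{Pr}_{s'}(\lozenge^{\leq t}g)\right|\leq 1-e^{-q t(e^{\delta}(1+\varepsilon)-1)}.$$
   Context: A CTMC $(S,P,E,s_{init},L)$: finite $S$, $P\colon S\to\mathrm{Distr}(S)$ ($P(s,A)=\sum_{a\in A}P(s,a)$), $E\colon S\to\mathbb{R}_{>0}$, initial state, labeling $L$; residence time in $s$ is exponential with rate $E(s)$, then a jump to $s'$ with probability $P(s,s')$. $\mathrm{Pr}_s(\lozenge^{\leq t}g)$: probability that the CTMC started in $s$ reaches $g$ within time $t$. For $R\subseteq S\times S$, $R(A)=\{t'\mid\exists a\in A:(a,t')\in R\}$. A reflexive symmetric $R$ is an $(\varepsilon,\delta)$-bisimulation if for all $(s,s')\in R$: $L(s)=L(s')$, $|\ln E(s)-\ln E(s')|\leq\delta$, and $P(s,A)\leq P(s',R(A))+\varepsilon$ for all $A\subseteq S$; $s\sim_{\varepsilon,\delta}s'$ if some such relation contains $(s,s')$. Standing assumption: $g$ is the unique goal state, absorbing and uniquely labeled, and all states from which $g$ is unreachable are collapsed into one absorbing uniquely labeled fail state. *)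

(* Defs.v *)
From HB Require Import structures.
From mathcomp Require Import all_boot all_order all_algebra.
From mathcomp Require Import Rstruct.
From Stdlib Require Import Reals.
From Coquelicot Require Import Coquelicot.

Set Implicit Arguments.
Unset Strict Implicit.
Unset Printing Implicit Defensive.

Section RSums.
Local Open Scope ring_scope.
Definition rsum (I : finType) (F : I -> R) : R := \sum_(i : I) F i.
Definition rsum_in (I : finType) (A : {set I}) (F : I -> R) : R :=
  \sum_(i in A) F i.
End RSums.

Local Open Scope R_scope.

Record ctmc (S : finType) (Lab : Type) := CTMC {
  P : S -> S -> R;
  E : S -> R;
  s_init : S;
  L : S -> Lab;
  P_ge0 : forall s s', 0 <= P s s';
  P_sum1 : forall s, rsum (P s) = 1;
  E_pos : forall s, 0 < E s
}.

Section CTMCDefs.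
Variables (S : finType) (Lab : Type) (M : ctmc S Lab).

Definition Pset (s : S) (A : {set S}) : R := rsum_in A (P M s).

Definition rimage (Rel : rel S) (A : {set S}) : {set S} :=
  [set t' | [exists a in A, Rel a t']].

Definition is_eps_delta_bisim (eps delta : R) (Rel : rel S) : Prop :=
  (forall s, Rel s s) /\ (forall s s', Rel s s' -> Rel s' s) /\
  forall s s', Rel s s' ->
    L M s = L M s' /\
    Rabs (ln (E M s) - ln (E M s')) <= delta /\
    forall A : {set S}, Pset s A <= Pset s' (rimage Rel A) + eps.

Definition bisimilar (eps delta : R) (s s' : S) : Prop :=
  exists Rel : rel S, is_eps_delta_bisim eps delta Rel /\ Rel s s'.

Definition edge : rel S := [rel a b | Rlt_dec 0 (P M a b)].
Definition reachable (s s' : S) : bool := connect edge s s'.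

Definition goal_assumptions (g : S) : Prop :=
  P M g g = 1 /\ (forall s, L M s = L M g -> s = g) /\
  (forall s s', ~~ reachable s g -> ~~ reachable s' g -> s = s') /\
  (forall f, ~~ reachable f g ->
     P M f f = 1 /\ forall s, L M s = L M f -> s = f).

(* Time-bounded reachability probability Pr_s(<>^{<=t} g), defined as the
   least solution of the standard Volterra integral equation
   (Baier-Haverkort-Hermanns-Katoen): approximant n is the probability of
   reaching g within time t using at most n jumps. *)
Fixpoint reach_approx (g : S) (n : nat) (s : S) (t : R) : R :=
  if s == g then 1 else
  match n with
  | O => 0
  | m.+1 =>
      RInt (fun x => E M s * exp (- (E M s * x)) *
                     rsum (fun s' => P M s s' * reach_approx g m s' (t - x)))
           0 t
  end.

Definition reach_prob (g : S) (s : S) (t : R) : R :=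
  real (Sup_seq (fun n => Finite (reach_approx g n s t))).

Definition max_rate : R := \big[Rmax/0]_(p : S) E M p.
End CTMCDefs.

(* Main.v *)
Require Import Defs.
From mathcomp Require Import all_boot all_order all_algebra.
From mathcomp Require Import Rstruct.
From Stdlib Require Import Reals Lra Psatz FunctionalExtensionality.
From Coquelicot Require Import Coquelicot.

Module PA.
Set Implicit Arguments.
Unset Strict Implicit.
Unset Printing Implicit Defensive.
Import Order.TTheory GRing.Theory Num.Theory.

Local Open Scope R_scope.

Lemma rsum_ge0 (I : finType) (F : I -> R) : (forall i, 0 <= F i) -> 0 <= rsum F.
Proof.
move=> H; apply/RleP; rewrite /rsum; apply: sumr_ge0 => i _; exact/RleP.
Qed.

Lemma rsum_le (I : finType) (F G : I -> R) : (forall i, F i <= G i) -> rsum F <= rsum G.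
Proof.
move=> H; apply/RleP; rewrite /rsum; apply: ler_sum => i _; exact/RleP.
Qed.

Lemma rsum_plus (I : finType) (F G : I -> R) : rsum (fun i => F i + G i) = rsum F + rsum G.
Proof. by rewrite /rsum big_split. Qed.

Lemma rsum_in_ge0 (I : finType) A (F : I -> R) : (forall i, 0 <= F i) -> 0 <= rsum_in A F.
Proof.
move=> H; apply/RleP; rewrite /rsum_in; apply: sumr_ge0 => i _; exact/RleP.
Qed.

Lemma exists_min (I : finType) (A : {set I}) (f : I -> R) a :
  a \in A -> exists2 a0, a0 \in A & forall b, b \in A -> f a0 <= f b.
Proof.
move=> aA.
case: (@arg_minP _ R I a (fun i => i \in A) f aA) => a0 a0A H.
exists a0 => // b bA; apply/RleP; exact: H.
Qed.

End PA.

Module PB.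
Import PA.
Set Implicit Arguments.
Unset Strict Implicit.
Unset Printing Implicit Defensive.
Import Order.TTheory GRing.Theory Num.Theory.
Local Open Scope R_scope.

Lemma rsum_if (I : finType) (A : {set I}) (F : I -> R) :
  rsum (fun a => if a \in A then F a else 0) = rsum_in A F.
Proof. by rewrite /rsum /rsum_in [RHS]big_mkcond. Qed.

Lemma rsum_in_mulr (I : finType) (A : {set I}) (F : I -> R) m :
  rsum_in A (fun a => F a * m) = rsum_in A F * m.
Proof. by rewrite /rsum_in -mulr_suml. Qed.

Lemma rsum0 (I : finType) : rsum (fun _ : I => 0) = 0.
Proof. by rewrite /rsum big1. Qed.

Lemma layer (I : finType) (p p' : I -> R) (Rel : rel I) (eps : R) :
  (forall a, 0 <= p a) -> (forall a, 0 <= p' a) -> 0 <= eps ->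
  (forall A : {set I}, rsum_in A p <= rsum_in (rimage Rel A) p' + eps) ->
  forall n (f g : I -> R) (M : R), leq #|[set a | (0 < f a)%O]| n ->
  0 <= M -> (forall a, 0 <= f a <= M) -> (forall b, 0 <= g b) ->
  (forall a b, Rel a b -> f a <= g b) ->
  rsum (fun a => p a * f a) <= rsum (fun b => p' b * g b) + eps * M.
Proof.
move=> p0 p'0 e0 HP; elim=> [|n IH] f g M Hc M0 Hf Hg Hfg.
- have f0 : forall a, f a = 0.
    move=> a; have [a1 a2] := Hf a; case: (Rle_lt_or_eq_dec _ _ a1) => // h.
    move: Hc; rewrite leqn0 => /eqP/cards0_eq/setP/(_ a).
    by rewrite !inE; move/RltP: h => ->.
  have -> : rsum (fun a => p a * f a) = 0.
    rewrite -(rsum0 I); congr rsum; apply: functional_extensionality => a; rewrite f0; ring.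
  have := rsum_ge0 (fun b => Rmult_le_pos _ _ (p'0 b) (Hg b)).
  have := Rmult_le_pos _ _ e0 M0. lra.
- set A := [set a | (0 < f a)%O].
  case: (set_0Vmem A) => [A0|[a aA]].
    apply: IH => //; by rewrite -/A A0 cards0.
  have [a0 a0A Hmin] := exists_min f aA.
  set m := f a0.
  have {}Hmin : forall b, b \in A -> m <= f b := Hmin.
  have m0 : 0 < m by move: a0A; rewrite inE => /RltP.
  have mM : m <= M by case: (Hf a0).
  pose f1 a := Rmax (f a - m) 0.
  pose g1 b := Rmax (g b - m) 0.
  pose g0 b := Rmin (g b) m.
  have Hc1 : leq #|[set a | (0 < f1 a)%O]| n.
    have sub : [set a | (0 < f1 a)%O] \subset A :\ a0.
      apply/subsetP => x; rewrite !inE => /RltP h.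
      rewrite /f1 in h.
      apply/andP; split.
      + apply/eqP => ex; subst x; move: h; rewrite /m.
        rewrite Rminus_diag Rmax_left; lra.
      + apply/RltP; move: h; rewrite /Rmax; case: Rle_dec => _; lra.
    apply: leq_trans (subset_leq_card sub) _.
    move: Hc; rewrite (cardsD1 a0 A) a0A /=; by [].
  have IH1 := IH f1 g1 (M - m) Hc1.
  have H1 : rsum (fun a => p a * f1 a) <= rsum (fun b => p' b * g1 b) + eps * (M - m).
    apply: IH1.
    + lra.
    + move=> x; rewrite /f1; have := Hf x; rewrite /Rmax; case: Rle_dec; lra.
    + move=> x; rewrite /g1 /Rmax; case: Rle_dec; lra.
    + move=> x y Rxy; have := Hfg x y Rxy; rewrite /f1 /g1 /Rmax.
      do 2 case: Rle_dec; lra.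
  have E1 : rsum (fun a => p a * f a) =
      rsum (fun a => p a * f1 a) + rsum_in A p * m.
    rewrite -rsum_in_mulr -rsum_if -rsum_plus; congr rsum.
    apply: functional_extensionality => x; rewrite /f1.
    case: ifP => xA.
    + have fx : m <= f x by apply: Hmin.
      rewrite Rmax_left; [ring | lra].
    + have fx : f x = 0.
        have [h1 h2] := Hf x; case: (Rle_lt_or_eq_dec _ _ h1) => // h.
        by move: xA; rewrite inE; move/RltP: h => ->.
      rewrite fx Rmax_right; [ring | lra].
  have E2 : rsum (fun b => p' b * g b) =
      rsum (fun b => p' b * g1 b) + rsum (fun b => p' b * g0 b).
    rewrite -rsum_plus; congr rsum.
    apply: functional_extensionality => x; rewrite -Rmult_plus_distr_l; congr (_ * _).
    rewrite /g1 /g0 /Rmax /Rmin.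
    do 2 case: Rle_dec; intros; lra.
  have E3 : rsum_in (rimage Rel A) p' * m <= rsum (fun b => p' b * g0 b).
    rewrite -rsum_in_mulr -rsum_if; apply: rsum_le => x.
    case: ifP => xR.
    + apply: Rmult_le_compat_l => //.
      move: xR; rewrite inE => /existsP [y /andP [yA Ryx]].
      have := Hfg y x Ryx; have := Hmin y yA.
      rewrite /g0 /Rmin; case: Rle_dec; intros; lra.
    + apply: Rmult_le_pos => //; rewrite /g0 /Rmin; case: Rle_dec => _; [apply: Hg|lra].
  have HA := HP A.
  rewrite E1 E2.
  have := Rmult_le_compat_r m _ _ (Rlt_le _ _ m0) HA.
  nra.
Qed.

End PB.

Module PC.
Import PA PB.
Set Implicit Arguments.
Unset Strict Implicit.
Unset Printing Implicit Defensive.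
Local Open Scope R_scope.

Lemma cont_mul (f g : R -> R) x : continuous f x -> continuous g x ->
  continuous (fun y => f y * g y) x.
Proof. exact: continuous_mult. Qed.

Lemma cont_plus (f g : R -> R) x : continuous f x -> continuous g x ->
  continuous (fun y => f y + g y) x.
Proof. exact: continuous_plus. Qed.

Lemma cont_expterm (a b : R) x : continuous (fun y => a * exp (b * y)) x.
Proof. apply: ex_derive_continuous; auto_derive; done. Qed.

Lemma cont_shift (h : R -> R) t x : (forall y, continuous h y) ->
  continuous (fun y => h (t - y)) x.
Proof.
move=> H; apply: (continuous_comp (fun y => t - y) h).
  apply: ex_derive_continuous; auto_derive; done.
exact: H.
Qed.

Lemma int_G (K c l t : R) :
  RInt (fun x => K * exp (- (K * x)) + exp (- (c * t)) * ((c - l) * exp ((c - l) * x))) 0 t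
  = (- exp (- (K * t)) + exp (- (c * t)) * exp ((c - l) * t))
    - (- exp (- (K * 0)) + exp (- (c * t)) * exp ((c - l) * 0)).
Proof.
apply: is_RInt_unique.
apply: (is_RInt_derive (fun x => - exp (- (K * x)) + exp (- (c * t)) * exp ((c - l) * x))).
- move=> x _; auto_derive; first done; ring.
- move=> x _; apply: ex_derive_continuous; auto_derive; done.
Qed.

Lemma int_G' (K c l t : R) :
  RInt (fun x => K * exp (- (K * x)) + exp (- (c * t)) * ((c - l) * exp ((c - l) * x))) 0 t
  = 1 - exp (- (c * t)) + (exp (- (l * t)) - exp (- (K * t))).
Proof.
rewrite int_G.
have e1 : exp (- (c * t)) * exp ((c - l) * t) = exp (- (l * t)).
  rewrite -exp_plus; f_equal; ring.
rewrite e1 !Rmult_0_r Ropp_0 exp_0; lra.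
Qed.

Lemma exint_ok (k : R -> R) t : (forall x, continuous k x) -> ex_RInt k 0 t.
Proof. move=> H; apply: ex_RInt_continuous => z _; exact: H. Qed.

Lemma cont_integrand (E : R) (h : R -> R) t x : (forall y, continuous h y) ->
  continuous (fun x => E * exp (- (E * x)) * h (t - x)) x.
Proof.
move=> H; apply: cont_mul; last exact: cont_shift.
have -> : (fun x => E * exp (- (E * x))) = (fun x => E * exp ((- E) * x)).
  by apply: FunctionalExtensionality.functional_extensionality => y; rewrite Ropp_mult_distr_l.
exact: cont_expterm.
Qed.

Lemma cont_G (K c l t : R) x :
  continuous (fun x => K * exp (- (K * x)) + exp (- (c * t)) * ((c - l) * exp ((c - l) * x))) x.
Proof. apply: ex_derive_continuous; auto_derive; done. Qed.

Lemma RInt_le_G (k : R -> R) K c l t :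
  0 <= t -> (forall x, continuous k x) ->
  (forall x, 0 < x < t -> k x <= K * exp (- (K * x)) + exp (- (c * t)) * ((c - l) * exp ((c - l) * x))) ->
  RInt k 0 t <= 1 - exp (- (c * t)) + (exp (- (l * t)) - exp (- (K * t))).
Proof.
move=> t0 kc H; rewrite -int_G'.
apply: RInt_le => //; first exact: exint_ok.
apply: exint_ok => x; exact: cont_G.
Qed.

Lemma exp_mono_le a b : a <= b -> exp a <= exp b.
Proof. move=> H; case: (Rle_lt_or_eq_dec _ _ H) => h; [apply: Rlt_le; exact: exp_increasing| by rewrite h; lra]. Qed.

Lemma step (E l eps c t : R) (h h' : R -> R) :
  0 < E -> E <= l -> 0 <= eps <= 1 -> l - E + E * eps <= c -> 0 <= t ->
  (forall y, continuous h y) -> (forall y, continuous h' y) ->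
  (forall y, 0 <= y <= t -> (0 <= h y <= 1 /\ 0 <= h' y <= 1) /\
      Rabs (h y - h' y) <= eps + (1 - eps) * (1 - exp (- (c * y)))) ->
  Rabs (RInt (fun x => E * exp (- (E * x)) * h (t - x)) 0 t -
        RInt (fun x => l * exp (- (l * x)) * h' (t - x)) 0 t) <= 1 - exp (- (c * t)).
Proof.
move=> E0 El e01 Hc t0 hc h'c H.
have ex1 : ex_RInt (fun x => E * exp (- (E * x)) * h (t - x)) 0 t.
  by apply: exint_ok => x; exact: cont_integrand.
have ex2 : ex_RInt (fun x => l * exp (- (l * x)) * h' (t - x)) 0 t.
  by apply: exint_ok => x; exact: cont_integrand.
have elt : exp (- (l * t)) <= exp (- (E * t)) by apply: exp_mono_le; nra.
have key : forall x, 0 < x < t ->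
  let A := exp (- (E * x)) in let B := exp (- (l * x)) in
  let C := exp (- (c * (t - x))) in
  exp (- (c * t)) * exp ((c - l) * x) = B * C /\ B <= A /\ 0 < B /\ 0 < C /\ C <= 1 /\
  (0 <= h (t - x) <= 1 /\ 0 <= h' (t - x) <= 1) /\
  Rabs (h (t - x) - h' (t - x)) <= eps + (1 - eps) * (1 - C).
  move=> x xt A B C; split; last split; last split; last split; last split.
  - rewrite /B /C -!exp_plus; f_equal; ring.
  - apply: exp_mono_le; nra.
  - exact: exp_pos.
  - exact: exp_pos.
  - rewrite -exp_0; apply: exp_mono_le; have : 0 <= c by nra. nra.
  - apply: H; lra.
apply: Rabs_le; split.
-
  suff : RInt (fun x => l * exp (- (l * x)) * h' (t - x)) 0 t -
         RInt (fun x => E * exp (- (E * x)) * h (t - x)) 0 t <= 1 - exp (- (c * t)) by lra.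
  rewrite -[_ - _](RInt_minus _ _ _ _ ex2 ex1).
  have := @RInt_le_G (fun x => minus (l * exp (- (l * x)) * h' (t - x)) (E * exp (- (E * x)) * h (t - x))) l c l t t0.
  rewrite Rminus_diag Rplus_0_r; apply.
  + move=> x; apply: continuous_minus; exact: cont_integrand.
  + move=> x xt; have [e1 [e2 [e3 [e4 [e5 [[e6 e7] e8]]]]]] := key x xt.
    move: e1 e2 e3 e4 e5 e6 e7 e8.
    set A := exp (- (E * x)); set B := exp (- (l * x)); set C := exp (- (c * (t - x))).
    move=> e1 e2 e3 e4 e5 e6 e7 e8. rewrite /minus /plus /opp /=.
    have -> : exp (- (c * t)) * ((c - l) * exp ((c - l) * x)) = (c - l) * (B * C) by rewrite -e1; ring.
    move/Rabs_le_between: e8 => e8.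
    have s1 : E * B * h (t - x) <= E * A * h (t - x).
      apply: Rmult_le_compat_r; first lra. apply: Rmult_le_compat_l; lra.
    have s2 : l * h' (t - x) - E * h (t - x) <= l - E * (1 - eps) * C by nra.
    have s3 : 0 <= C * (c - l + E * (1 - eps)) by apply: Rmult_le_pos; lra.
    have s4 : B * (l * h' (t - x) - E * h (t - x)) <= B * (l - E * (1 - eps) * C).
      apply: Rmult_le_compat_l; lra.
    have s5 : 0 <= B * (C * (c - l + E * (1 - eps))) by apply: Rmult_le_pos; lra.
    nra.
- rewrite -[_ - _](RInt_minus _ _ _ _ ex1 ex2).
  apply: Rle_trans (_ : 1 - exp (- (c * t)) + (exp (- (l * t)) - exp (- (E * t))) <= _); last lra.
  apply: RInt_le_G => //.
  + move=> x; apply: continuous_minus; exact: cont_integrand.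
  + move=> x xt; have [e1 [e2 [e3 [e4 [e5 [[e6 e7] e8]]]]]] := key x xt.
    move: e1 e2 e3 e4 e5 e6 e7 e8.
    set A := exp (- (E * x)); set B := exp (- (l * x)); set C := exp (- (c * (t - x))).
    move=> e1 e2 e3 e4 e5 e6 e7 e8. rewrite /minus /plus /opp /=.
    have -> : exp (- (c * t)) * ((c - l) * exp ((c - l) * x)) = (c - l) * (B * C) by rewrite -e1; ring.
    move/Rabs_le_between: e8 => e8.
    have s1 : (l - E) * B * h' (t - x) >= 0.
      apply: Rle_ge; apply: Rmult_le_pos; last lra. apply: Rmult_le_pos; lra.
    have s2 : E * (A - B) * h (t - x) <= E * (A - B).
      have : 0 <= E * (A - B) by apply: Rmult_le_pos; lra. nra.
    have s3 : E * B * (h (t - x) - h' (t - x)) <= E * B * (eps + (1 - eps) * (1 - C)).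
      apply: Rmult_le_compat_l; [apply: Rmult_le_pos; lra | lra].
    have s5 : 0 <= B * (C * (c - l + E * (1 - eps))).
      apply: Rmult_le_pos; first lra. apply: Rmult_le_pos; lra.
    nra.
Qed.

End PC.

Module PD.
Import PA PB PC.
Set Implicit Arguments.
Unset Strict Implicit.
Unset Printing Implicit Defensive.
Local Open Scope R_scope.

Lemma sup_fin (a : nat -> R) : (forall n, 0 <= a n <= 1) ->
  exists x, Sup_seq (fun n => Finite (a n)) = Finite x /\ (forall n, a n <= x) /\
    (forall e, 0 < e -> exists n, x - e < a n).
Proof.
move=> Ha; have := Sup_seq_correct (fun n => Finite (a n)).
have Hle : forall n, Rbar_le (a n) (Sup_seq (fun n => Finite (a n))).
  move=> n; apply: (Sup_seq_minor_le _ _ n); exact: Rbar_le_refl.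
case E: (Sup_seq _) => [x| |] /= H.
- exists x; split => //; split.
  + move=> n; have := Hle n; by rewrite E.
  + move=> e e0; have [_ [n Hn]] := H (mkposreal e e0); by exists n.
- have [n Hn] := H 1; have := Ha n; simpl in Hn; lra.
- have := H 0 O; have := Ha O; simpl; lra.
Qed.

Lemma sup_diff (a b : nat -> R) B : (forall n, 0 <= a n <= 1) -> (forall n, 0 <= b n <= 1) ->
  (forall n, Rabs (a n - b n) <= B) ->
  Rabs (real (Sup_seq (fun n => Finite (a n))) - real (Sup_seq (fun n => Finite (b n)))) <= B.
Proof.
move=> Ha Hb Hab.
have [x [-> [ax xa]]] := sup_fin Ha.
have [y [-> [by_ yb]]] := sup_fin Hb.
simpl; apply: Rabs_le; split.
- apply: Rnot_lt_le => h.
  have [n Hn] := yb (y - x - B) ltac:(lra).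
  have := ax n; have := Hab n; move/Rabs_le_between => ?; lra.
- apply: Rnot_lt_le => h.
  have [n Hn] := xa (x - y - B) ltac:(lra).
  have := by_ n; have := Hab n; move/Rabs_le_between => ?; lra.
Qed.

Section CR.
Local Open Scope ring_scope.
Lemma cont_rsum (I : finType) (F : I -> R -> R) x : (forall i, continuous (F i) x) ->
  continuous (fun y => rsum (fun i => F i y)) x.
Proof.
move=> H; rewrite /rsum.
suff : forall r : seq I, continuous (fun y => (\sum_(i <- r) F i y)) x by apply.
elim=> [|a r IH].
- have -> : (fun y => (\sum_(i <- [::]) F i y)) = fun _ => 0.
    by apply: functional_extensionality => y; rewrite big_nil.
  exact: continuous_const.
- have -> : (fun y => (\sum_(i <- a :: r) F i y)) = fun y => Rplus (F a y) (\sum_(i <- r) F i y).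
    by apply: functional_extensionality => y; rewrite big_cons.
  exact: (continuous_plus (F a) (fun y => (\sum_(i <- r) F i y))).
Qed.
End CR.

Lemma cont_RInt0 (K : R -> R) t : (forall y, continuous K y) -> continuous (fun t => RInt K 0 t) t.
Proof.
move=> H; apply: ex_derive_continuous; exists (K t).
apply: is_derive_RInt; last exact: H.
apply: filter_forall => b0; apply: RInt_correct; apply: ex_RInt_continuous => z _; exact: H.
Qed.

Lemma conv_eq (E : R) (h : R -> R) t : (forall y, continuous h y) ->
  RInt (fun x => E * exp (- (E * x)) * h (t - x)) 0 t =
  E * exp (- (E * t)) * RInt (fun y => exp (E * y) * h y) 0 t.
Proof.
move=> hc.
pose k y := E * exp (- (E * (t - y))) * h y.
have kc : forall y, continuous k y.
  move=> y; apply: (continuous_mult (fun y => E * exp (- (E * (t - y)))) h); last exact: hc.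
  apply: ex_derive_continuous; auto_derive; done.
have kex : forall a b, ex_RInt k a b by move=> a b; apply: ex_RInt_continuous => z _; exact: kc.
rewrite (RInt_ext _ (fun x => opp (scal (-1) (k (-1 * x + t))))); last first.
  move=> x _; rewrite /opp /scal /= /mult /= /k.
  have -> : t - (-1 * x + t) = x by ring.
  have -> : -1 * x + t = t - x by ring.
  ring.
rewrite RInt_opp; last first.
  apply: ex_RInt_continuous => z _.
  apply: (continuous_scal_r (-1) (fun z => k (-1 * z + t))).
  apply: (continuous_comp (fun z => -1 * z + t) k); last exact: kc.
  apply: ex_derive_continuous; auto_derive; done.
rewrite RInt_comp_lin; last exact: kex.
have -> : -1 * 0 + t = t by ring.
have -> : -1 * t + t = 0 by ring.
rewrite opp_RInt_swap; last exact: kex.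
rewrite (RInt_ext _ (fun y => scal (E * exp (- (E * t))) (exp (E * y) * h y))); last first.
  move=> x _; rewrite /scal /= /mult /= /k.
  have -> : exp (- (E * (t - x))) = exp (- (E * t)) * exp (E * x).
    rewrite -exp_plus; f_equal; ring.
  ring.
rewrite RInt_scal //.
apply: ex_RInt_continuous => z _.
apply: (continuous_mult (fun y => exp (E * y)) h); last exact: hc.
apply: ex_derive_continuous; auto_derive; done.
Qed.

Lemma conv_cont (E : R) (h : R -> R) t : (forall y, continuous h y) ->
  continuous (fun t => RInt (fun x => E * exp (- (E * x)) * h (t - x)) 0 t) t.
Proof.
move=> hc.
have -> : (fun t => RInt (fun x => E * exp (- (E * x)) * h (t - x)) 0 t) =
  fun t => (E * exp (- (E * t))) * RInt (fun y => exp (E * y) * h y) 0 t.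
  by apply: functional_extensionality => u; rewrite conv_eq.
apply: (continuous_mult (fun t => E * exp (- (E * t))) (fun t => RInt (fun y => exp (E * y) * h y) 0 t)).
  apply: ex_derive_continuous; auto_derive; done.
apply: cont_RInt0 => y.
apply: (continuous_mult (fun y => exp (E * y)) h); last exact: hc.
apply: ex_derive_continuous; auto_derive; done.
Qed.

End PD.

Module PE.
Import PA PB PC PD.
Set Implicit Arguments.
Unset Strict Implicit.
Unset Printing Implicit Defensive.
Local Open Scope R_scope.

Section Reach.
Variables (S : finType) (Lab : Type) (M : ctmc S Lab) (g : S).

Definition hh n s u := rsum (fun s' => P M s s' * reach_approx M g n s' u).

Lemma reach_succ n s t : s != g ->
  reach_approx M g n.+1 s t =
  RInt (fun x => E M s * exp (- (E M s * x)) * hh n s (t - x)) 0 t.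
Proof. by move=> /negbTE sg; rewrite /= sg. Qed.

Lemma rsum_P_bound s (F : S -> R) : (forall a, 0 <= F a <= 1) ->
  0 <= rsum (fun a => P M s a * F a) <= 1.
Proof.
move=> H; split.
- apply: rsum_ge0 => a; apply: Rmult_le_pos; [exact: P_ge0 | by case: (H a)].
- rewrite -(P_sum1 M s); apply: rsum_le => a.
  have := P_ge0 M s a; case: (H a) => ? ?; nra.
Qed.

Lemma reach_props n : forall s,
  (forall t, continuous (reach_approx M g n s) t) /\
  (forall t, 0 <= t -> 0 <= reach_approx M g n s t <= 1).
Proof.
elim: n => [|n IH] s.
- rewrite /=; case: (s == g); split => t; try exact: continuous_const; lra.
- case sg: (s == g).
    have -> : reach_approx M g n.+1 s = fun _ => 1 by apply: functional_extensionality => t; rewrite /= sg.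
    split => t; [exact: continuous_const | lra].
  have hc : forall y, continuous (hh n s) y.
    move=> y; rewrite /hh; apply: (@cont_rsum _ (fun i y => P M s i * reach_approx M g n i y)) => i.
    apply: (continuous_mult (fun _ => P M s i)); [exact: continuous_const | exact: (proj1 (IH i))].
  have hb : forall y, 0 <= y -> 0 <= hh n s y <= 1.
    move=> y y0; apply: rsum_P_bound => a; exact: (proj2 (IH a)).
  have -> : reach_approx M g n.+1 s = fun t => RInt (fun x => E M s * exp (- (E M s * x)) * hh n s (t - x)) 0 t.
    by apply: functional_extensionality => t; rewrite reach_succ ?sg.
  split => t.
    exact: conv_cont.
  move=> t0; have E0 := E_pos M s.
  split.
  + apply: RInt_ge_0 => //.
      apply: exint_ok => x; exact: cont_integrand.
    move=> x xt; have := hb (t - x) ltac:(lra); have := exp_pos (- (E M s * x)) => e1 [h1 h2]; apply: Rmult_le_pos => //; apply: Rmult_le_pos; lra.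
  + have := @RInt_le_G (fun x => E M s * exp (- (E M s * x)) * hh n s (t - x)) (E M s) (E M s) (E M s) t t0.
    rewrite Rminus_diag.
    have := exp_pos (- (E M s * t)).
    move=> ? H; apply: Rle_trans (H _ _) _.
    * move=> x; exact: cont_integrand.
    * move=> x xt; rewrite Rmult_0_l Rmult_0_r Rplus_0_r.
      have := hb (t - x) ltac:(lra); have := exp_pos (- (E M s * x)) => e1 [h1 h2].
      rewrite -[X in _ <= X]Rmult_1_r; apply: Rmult_le_compat_l => //.
      apply: Rmult_le_pos; lra.
    * lra.
Qed.

Lemma hh_cont n s y : continuous (hh n s) y.
Proof.
rewrite /hh; apply: (@cont_rsum _ (fun i y => P M s i * reach_approx M g n i y)) => i.
apply: (continuous_mult (fun _ => P M s i)); [exact: continuous_const | exact: (proj1 (reach_props n i))].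
Qed.

Lemma hh_bound n s y : 0 <= y -> 0 <= hh n s y <= 1.
Proof. move=> y0; apply: rsum_P_bound => a; exact: (proj2 (reach_props n a)). Qed.

Lemma rsum_mull (I : finType) (F : I -> R) k : rsum (fun a => k * F a) = k * rsum F.
Proof. by rewrite /rsum -GRing.mulr_sumr. Qed.

Lemma hdiff (Rel : rel S) eps (s s' : S) (F : S -> R) beta :
  0 <= eps <= 1 -> (forall A, Pset M s A <= Pset M s' (rimage Rel A) + eps) ->
  (forall a, 0 <= F a <= 1) -> 0 <= beta <= 1 ->
  (forall a b, Rel a b -> Rabs (F a - F b) <= beta) ->
  rsum (fun a => P M s a * F a) <= rsum (fun a => P M s' a * F a) + (eps + (1 - eps) * beta).
Proof.
move=> e01 HP HF b01 HR.
pose f a := Rmax (F a - beta) 0.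
have L := @layer S (P M s) (P M s') Rel eps (fun a => P_ge0 M s a) (fun a => P_ge0 M s' a)
  ltac:(lra) HP #|[set a | (0 < f a)%O]| f F (1 - beta) (leqnn _) ltac:(lra).
have L' : rsum (fun a => P M s a * f a) <= rsum (fun b => P M s' b * F b) + eps * (1 - beta).
  apply: L.
  - move=> a; rewrite /f /Rmax; case: Rle_dec; have := HF a; lra.
  - move=> b; by case: (HF b).
  - move=> a b Rab; have := HR a b Rab; move/Rabs_le_between.
    have := HF b; rewrite /f /Rmax; case: Rle_dec; lra.
have L2 : rsum (fun a => P M s a * F a) <= rsum (fun a => P M s a * f a) + beta.
  rewrite -[X in _ + X]Rmult_1_r -(P_sum1 M s) -rsum_mull -rsum_plus.
  apply: rsum_le => a.
  have := P_ge0 M s a; rewrite /f /Rmax; case: Rle_dec => ? ?; nra.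
lra.
Qed.

Lemma max_rate_ge r p : p \in r -> E M p <= \big[Rmax/0]_(i <- r) E M i.
Proof.
elim: r => [|a r IH] //=.
rewrite inE big_cons => /orP [/eqP ->|pr]; first exact: Rmax_l.
apply: Rle_trans (IH pr) _; exact: Rmax_r.
Qed.

Lemma E_le_q p : E M p <= max_rate M.
Proof. rewrite /max_rate; apply: max_rate_ge; exact: mem_index_enum. Qed.

Lemma main_ind (Rel : rel S) eps delta c :
  (forall s, L M s = L M g -> s = g) ->
  is_eps_delta_bisim M eps delta Rel -> 0 <= eps <= 1 -> 0 <= delta ->
  c = max_rate M * (exp delta * (1 + eps) - 1) ->
  forall n a b, Rel a b -> forall u, 0 <= u ->
    Rabs (reach_approx M g n a u - reach_approx M g n b u) <= 1 - exp (- (c * u)).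
Proof.
move=> Lg [Rrefl [Rsym Hb]] e01 d0 ->; clear c.
have ed : 1 <= exp delta by rewrite -exp_0; apply: exp_mono_le.
have q0 : 0 < max_rate M by apply: Rlt_le_trans (E_le_q g); exact: E_pos.
set c := max_rate M * (exp delta * (1 + eps) - 1).
have c0 : 0 <= c by rewrite /c; apply: Rmult_le_pos; nra.
have Bb : forall u, 0 <= u -> 0 <= 1 - exp (- (c * u)) <= 1.
  move=> u u0; have := exp_pos (- (c * u)); have : exp (- (c * u)) <= 1.
    rewrite -exp_0; apply: exp_mono_le; nra.
  lra.
have lab : forall a b, Rel a b -> (a == g) = (b == g).
  move=> a b Rab; have [La _] := Hb a b Rab.
  case ag: (a == g); case bg: (b == g) => //.
  - move/eqP: ag => ag; subst a. have bg' : b = g by apply: Lg; rewrite -La.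
    by rewrite bg' eqxx in bg.
  - move/eqP: bg => bg; subst b. have ag' : a = g by apply: Lg; rewrite La.
    by rewrite ag' eqxx in ag.
elim=> [|n IH] a b Rab u u0.
- rewrite /= (lab a b Rab); rewrite Rminus_diag Rabs_R0; exact: (proj1 (Bb u u0)).
- case ag: (a == g).
    have bg : b == g by rewrite -(lab a b Rab).
    rewrite /= ag bg Rminus_diag Rabs_R0; exact: (proj1 (Bb u u0)).
  have bg : b != g by rewrite -(lab a b Rab) ag.
  have key : forall a b, Rel a b -> a != g -> b != g -> E M a <= E M b ->
      Rabs (reach_approx M g n.+1 a u - reach_approx M g n.+1 b u) <= 1 - exp (- (c * u)).
    move=> a' b' Rab' ag' bg' Eab.
    rewrite !reach_succ //.
    have [_ [Hln HPab]] := Hb a' b' Rab'.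
    have [_ [_ HPba]] := Hb b' a' (Rsym _ _ Rab').
    have Ea0 := E_pos M a'; have Eb0 := E_pos M b'.
    have Eb_le : E M b' <= E M a' * exp delta.
      rewrite -(exp_ln (E M b')) // -(exp_ln (E M a')) // -exp_plus.
      apply: exp_mono_le; move/Rabs_le_between: Hln; lra.
    have Eaq := E_le_q a'.
    apply: (@step _ _ eps) => //.
    + rewrite /c.
      have h1 : E M a' * (exp delta - 1 + eps) <= max_rate M * (exp delta - 1 + eps).
        apply: Rmult_le_compat_r; lra.
      have h2 : 0 <= max_rate M * eps * (exp delta - 1).
        apply: Rmult_le_pos; [apply: Rmult_le_pos|]; lra.
      nra.
    + exact: hh_cont.
    + exact: hh_cont.
    + move=> y [y0 yu]; split; first split; try exact: hh_bound.
      have beta01 := Bb y y0.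
      have IHy : forall a1 b1, Rel a1 b1 -> Rabs (reach_approx M g n a1 y - reach_approx M g n b1 y) <= 1 - exp (- (c * y)).
        move=> a1 b1 R1; exact: IH.
      have F01 : forall a1, 0 <= reach_approx M g n a1 y <= 1 by move=> a1; exact: (proj2 (reach_props n a1)).
      have d1 := hdiff e01 HPab F01 beta01 IHy.
      have d2 := hdiff e01 HPba F01 beta01 IHy.
      rewrite /hh; apply: Rabs_le; split; lra.
  case: (Rle_lt_dec (E M a) (E M b)) => Eab.
    apply: key => //; by rewrite ag.
  rewrite Rabs_minus_sym; apply: key => //; [exact: Rsym | by rewrite ag | lra].
Qed.
End Reach.

End PE.

Module PF.
Import PA PB PC PD PE.
Set Implicit Arguments.
Unset Strict Implicit.
Unset Printing Implicit Defensive.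
Local Open Scope R_scope.

Lemma Pset_le1 (S : finType) (Lab : Type) (M : ctmc S Lab) s A : Pset M s A <= 1.
Proof.
rewrite /Pset -(P_sum1 M s) -rsum_if; apply: rsum_le => a.
case: ifP => _; [lra | exact: P_ge0].
Qed.


End PF.

Import PA PB PC PD PE PF.
Local Open Scope R_scope.

Theorem proposition3 (S : finType) (Lab : Type) (M : ctmc S Lab) (g : S)
  (eps delta t : R) :
  goal_assumptions M g ->
  0 <= eps -> 0 <= delta -> 0 <= t ->
  forall s s' : S, bisimilar M eps delta s s' ->
  Rabs (reach_prob M g s t - reach_prob M g s' t) <=
    1 - exp (- (max_rate M * t * (exp delta * (1 + eps) - 1))).
Proof.
move=> [_ [Lg _]] e0 d0 t0 s s' [Rel [[Rrefl [Rsym Hb]] Rss']].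
set eps' := Rmin eps 1.
have e'01 : 0 <= eps' <= 1 by rewrite /eps' /Rmin; case: Rle_dec; lra.
have e'le : eps' <= eps by rewrite /eps' /Rmin; case: Rle_dec; lra.
have bis : is_eps_delta_bisim M eps' delta Rel.
  split => //; split => // a b Rab.
  have [La [Hln HP]] := Hb a b Rab.
  split => //; split => // A.
  rewrite /eps' /Rmin; case: Rle_dec => h; first exact: HP.
  have := Pset_le1 M a A.
  have : 0 <= Pset M b (rimage Rel A) by apply: rsum_in_ge0 => x; exact: P_ge0.
  lra.
have ed : 1 <= exp delta by rewrite -exp_0; apply: exp_mono_le.
have q0 : 0 < max_rate M by apply: Rlt_le_trans (E_le_q M g); exact: E_pos.
have Hn := main_ind (c := max_rate M * (exp delta * (1 + eps') - 1)) Lg bis e'01 d0 erefl.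
apply: Rle_trans.
  rewrite /reach_prob.
  apply: sup_diff.
  - move=> n; exact: (proj2 (reach_props M g n s)).
  - move=> n; exact: (proj2 (reach_props M g n s')).
  - move=> n; exact: Hn.
have : max_rate M * (exp delta * (1 + eps') - 1) * t <= max_rate M * t * (exp delta * (1 + eps) - 1).
  have : 0 <= max_rate M * t * exp delta * (eps - eps').
    apply: Rmult_le_pos; [apply: Rmult_le_pos; [apply: Rmult_le_pos|]|]; lra.
  nra.
move=> h; have : exp (- (max_rate M * t * (exp delta * (1 + eps) - 1))) <= exp (- (max_rate M * (exp delta * (1 + eps') - 1) * t)) by apply: exp_mono_le; lra.
lra.
Qed.
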